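(* For every integer $k\geqslant 1$, there exists a finite word $W$ over a $3$-letter alphabet with $r(W)\geqslant k$.
   Context: A square is a finite non-empty word of the form $XX$; a word is square-free if it has no square factor. A square reduction replaces a word $UXXV$ (with $X$ non-empty) by $UXV$. A reduct of $W$ is any square-free word obtainable from $W$ by a finite sequence of square reductions, and $r(W)$ is the number of distinct reducts of $W$. *)

(* Defs.v *)
From mathcomp Require Import all_boot.
Set Implicit Arguments. Unset Strict Implicit. Unset Printing Implicit Defensive.

Definition is_square (T : eqType) (w : seq T) : Prop :=
  exists X : seq T, X <> [::] /\ w = X ++ X.

Definition square_free (T : eqType) (w : seq T) : Prop :=
  forall U X V : seq T, X <> [::] -> w <> U ++ X ++ X ++ V.

Definition sq_step (T : eqType) (w w' : seq T) : Prop :=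
  exists U X V : seq T, X <> [::] /\ w = U ++ X ++ X ++ V /\ w' = U ++ X ++ V.

Inductive sq_reduces (T : eqType) : seq T -> seq T -> Prop :=
| sq_refl w : sq_reduces w w
| sq_trans w w' w'' : sq_step w w' -> sq_reduces w' w'' -> sq_reduces w w''.

Definition is_reduct (T : eqType) (W R : seq T) : Prop :=
  sq_reduces W R /\ square_free R.

Definition r_ge (T : eqType) (W : seq T) (k : nat) : Prop :=
  exists s : seq (seq T), uniq s /\ k <= size s /\ forall R, R \in s -> is_reduct W R.

(* Main.v *)
Require Import Defs.
From mathcomp Require Import all_boot.
From mathcomp Require Import zify.
Set Implicit Arguments. Unset Strict Implicit. Unset Printing Implicit Defensive.

Lemma sq_reduces_trans (T : eqType) (a b c : seq T) :
  sq_reduces a b -> sq_reduces b c -> sq_reduces a c.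
Proof. elim=> [w|w w' w'' st _ IH] // H; exact: sq_trans st (IH H). Qed.

Lemma sq_step_ctx (T : eqType) (P S a b : seq T) :
  sq_step a b -> sq_step (P ++ a ++ S) (P ++ b ++ S).
Proof.
case=> U [X [V [hX [-> ->]]]]; exists (P ++ U), X, (V ++ S).
by split=> //; split; rewrite -!catA.
Qed.

Lemma sq_reduces_ctx (T : eqType) (P S a b : seq T) :
  sq_reduces a b -> sq_reduces (P ++ a ++ S) (P ++ b ++ S).
Proof.
elim=> [w|w w' w'' st _ IH]; first exact: sq_refl.
exact: sq_trans (sq_step_ctx P S st) IH.
Qed.

Lemma sq_step1 (T : eqType) (U X V : seq T) : X != [::] ->
  sq_reduces (U ++ X ++ X ++ V) (U ++ X ++ V).
Proof.
move=> hX; apply: sq_trans (sq_refl _); exists U, X, V; split=> //; exact/eqP.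
Qed.

Definition hw (T : eqType) (f : T -> seq T) (w : seq T) := flatten (map f w).

Lemma hw_cat (T : eqType) (f : T -> seq T) u v : hw f (u ++ v) = hw f u ++ hw f v.
Proof. by rewrite /hw map_cat flatten_cat. Qed.

Lemma hw_cons (T : eqType) (f : T -> seq T) x v : hw f (x :: v) = f x ++ hw f v.
Proof. by []. Qed.

Lemma sq_step_hw (T : eqType) (f : T -> seq T) a b :
  (forall x, f x != [::]) -> sq_step a b -> sq_step (hw f a) (hw f b).
Proof.
move=> hf [U [X [V [hX [-> ->]]]]]; exists (hw f U), (hw f X), (hw f V).
split; last by rewrite !hw_cat.
case: X hX => [//|x X] _; rewrite hw_cons; have := hf x; by case: (f x).
Qed.

Lemma sq_reduces_hw (T : eqType) (f : T -> seq T) a b :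
  (forall x, f x != [::]) -> sq_reduces a b -> sq_reduces (hw f a) (hw f b).
Proof.
move=> hf; elim=> [w|w w' w'' st _ IH]; first exact: sq_refl.
exact: sq_trans (sq_step_hw hf st) IH.
Qed.

Lemma sq_reduces_subst (T : eqType) (D f : T -> seq T) w :
  (forall x, sq_reduces (D x) (f x)) -> sq_reduces (hw D w) (hw f w).
Proof.
move=> hD; elim: w => [|x w IH]; first exact: sq_refl.
rewrite !hw_cons; apply: (@sq_reduces_trans _ _ (f x ++ hw D w)).
  exact: (sq_reduces_ctx [::] (hw D w) (hD x)).
by have := sq_reduces_ctx (f x) [::] IH; rewrite !cats0.
Qed.


Section Sq.
Variables (T : eqType) (x0 : T).

Definition hsq (w : seq T) := exists p L, 0 < L /\ p + 2 * L <= size w /\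
  forall t, t < L -> nth x0 w (p + t) = nth x0 w (p + L + t).

Lemma nth_catS (s1 s2 : seq T) n : nth x0 (s1 ++ s2) (size s1 + n) = nth x0 s2 n.
Proof. by rewrite nth_cat ltnNge leq_addr /= addKn. Qed.

Lemma nth_catL (s1 s2 : seq T) n : n < size s1 -> nth x0 (s1 ++ s2) n = nth x0 s1 n.
Proof. by move=> h; rewrite nth_cat h. Qed.

Lemma sf_hsq w : ~ hsq w -> square_free w.
Proof.
move=> H U X V hX E; apply: H; exists (size U), (size X).
have hX0 : 0 < size X by case: X hX E.
split=> //; split; first by rewrite E !size_cat; lia.
move=> t ht; rewrite E nth_catS -addnA nth_catS nth_catS !nth_catL //.
Qed.

Lemma hsq_nsf w : hsq w -> ~ square_free w.
Proof.
move=> [p [L [hL [hs he]]]] sf.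
have hX : take L (drop p w) <> [::].
  move=> h0; have := congr1 size h0; rewrite size_takel /=; first lia.
  rewrite size_drop; lia.
apply: (sf (take p w) _ (drop (p + 2 * L) w) hX).
have e1 : take L (drop (p + L) w) = take L (drop p w).
  apply: (@eq_from_nth _ x0).
    rewrite !size_takel // size_drop; lia.
  move=> i; rewrite size_takel; last by rewrite size_drop; lia.
  move=> hi; rewrite !nth_take // !nth_drop -he //; congr nth; lia.
rewrite -{1}(cat_take_drop p w); congr cat.
rewrite -{1}(cat_take_drop L (drop p w)); congr cat.
rewrite drop_drop -{1}(cat_take_drop L (drop (L + p) w)) drop_drop.
rewrite (addnC L p) e1; congr cat; congr drop; lia.
Qed.

Definition psq (w : seq T) L := if 2 * L <= size w then take L w == take L (drop L w) else false.

Fixpoint hsqb (w : seq T) :=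
  if w is x :: w' then has (psq w) (iota 1 (size w)) || hsqb w' else false.

Lemma psqP w L : 0 < L -> reflect (2 * L <= size w /\ forall t, t < L -> nth x0 w t = nth x0 w (L + t)) (psq w L).
Proof.
move=> hL; rewrite /psq; case: ifP => hs; last by constructor; case=> h; rewrite h in hs.
apply: (iffP eqP).
  move=> E; split=> // t ht; rewrite -(nth_take x0 ht) E nth_take // nth_drop //.
move=> [_ H]; have h1 : L <= size w by lia.
have h2 : L <= size (drop L w) by rewrite size_drop; lia.
apply: (@eq_from_nth _ x0); first by rewrite !size_takel.
move=> t; rewrite size_takel //.
by move=> ht; rewrite !nth_take // nth_drop H.
Qed.

Lemma hsqbP w : reflect (hsq w) (hsqb w).
Proof.
elim: w => [|x w IH].
  by constructor; move=> [p [L [hL [hs _]]]]; move: hs => /=; lia.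
have -> : hsqb (x :: w) = has (psq (x :: w)) (iota 1 (size (x :: w))) || hsqb w by [].
apply: (iffP orP).
  case.
    move/hasP => [L]; rewrite mem_iota => /andP [hL1 _] /(psqP _ hL1) [hs he].
    by exists 0, L; split=> //; split=> // t ht; rewrite add0n he.
  move/IH => [p [L [hL [hs he]]]]; exists p.+1, L; split=> //; split.
move=> [[|p] [L [hL [hs he]]]].
  left; apply/hasP; exists L; first by rewrite mem_iota; move: hs => /=; lia.
  by apply/psqP => //; split=> // t ht; rewrite -he // add0n.
right; apply/IH; exists p, L; split; first done.
split; first by move: hs => /=; lia.
by move=> t ht; have := he t ht; rewrite !addSn.
Qed.

Variables (f : T -> seq T) (m : nat).
Hypothesis hf : forall a, size (f a) = m.

Lemma size_hw w : size (hw f w) = m * size w.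
Proof. by elim: w => [|a w IH] /=; rewrite ?muln0 // size_cat hf IH mulnS. Qed.

Lemma nth_hw w i r : i < size w -> r < m ->
  nth x0 (hw f w) (i * m + r) = nth x0 (f (nth x0 w i)) r.
Proof.
elim: w i => [|a w IH] [|i] //= hi hr; rewrite hw_cons nth_cat hf.
  by rewrite mul0n add0n hr.
by rewrite mulSn -addnA ltnNge leq_addr /= addKn; apply: IH.
Qed.

End Sq.


Section Crit.
Variables (T : eqType) (x0 : T) (al : seq T).
Hypothesis hal : forall a, a \in al.

Fixpoint allw n : seq (seq T) :=
  if n is n'.+1 then [seq x :: w | x <- al, w <- allw n'] else [:: [::]].

Lemma allwP w : w \in allw (size w).
Proof.
elim: w => [|x w IH] /=; first by rewrite mem_seq1.
by apply/allpairsP; exists (x, w).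
Qed.

Variables (f : T -> seq T) (m : nat).

Definition syncb := all (fun a => all (fun b => all (fun c =>
  all (fun r => take m (drop r (f a ++ f b)) != f c) (iota 1 m.-1)) al) al) al.
Definition firstb := all (fun a => all (fun b =>
  (nth x0 (f a) 0 == nth x0 (f b) 0) ==> (a == b)) al) al.
Definition smallb := all (fun n => all (fun w => if hsqb w then true else ~~ hsqb (hw f w)) (allw n))
  (iota 0 6).

Hypotheses (m0 : 0 < m) (hf : forall a, size (f a) = m)
  (hsync : syncb) (hfirst : firstb) (hsmall : smallb).

Lemma crit w : hsq x0 (hw f w) -> hsq x0 w.
Proof.
move=> [p [L [hL [hs he]]]].
rewrite (size_hw hf) in hs.
have nthH := nth_hw x0 hf.
case: (ltnP L (2 * m - 1)) => hLm.
-
  set i := p %/ m; set r := p %% m.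
  have hp : p = i * m + r by rewrite /i /r -divn_eq.
  have hr : r < m by rewrite /r ltn_pmod.
  set w' := take 5 (drop i w).
  have hw5 : size w' <= 5 by rewrite size_take; case: ifP => //; lia.
  have hwi : size w' <= size w - i by rewrite size_take size_drop; case: ifP; lia.
  have hsz : r + 2 * L <= m * size w'.
    rewrite /w' size_take size_drop; case: ifP => _; first lia.
    rewrite mulnBr; move: hs; rewrite hp (mulnC m i); lia.
  have e : forall k, k < m * size w' -> nth x0 (hw f w') k = nth x0 (hw f w) (i * m + k).
    move=> k hk; rewrite (divn_eq k m).
    have hb : k %% m < m by rewrite ltn_pmod.
    have ha : k %/ m < size w' by rewrite ltn_divLR // mulnC.
    rewrite nthH // addnA -mulnDl nthH //; last by lia.
    by rewrite /w' nth_take; [rewrite nth_drop | lia].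
  have hsq' : hsq x0 (hw f w').
    exists r, L; split=> //; split; first by rewrite (size_hw hf).
    move=> t ht; rewrite !e; try lia.
    by rewrite !addnA -hp he.
  have /(hsqbP x0) : hsqb w'.
    move/allP: hsmall => /(_ (size w')); rewrite mem_iota => /(_ ltac:(lia)).
    move/allP => /(_ w' (allwP w')).
    case: (hsqb w') => //= /negP []; exact/(hsqbP x0).
  move=> [p2 [L2 [hL2 [hs2 he2]]]].
  exists (i + p2), L2; split=> //; split; first lia.
  move=> t ht; have := he2 t ht; rewrite /w' !nth_take; try lia.
  by rewrite !nth_drop !addnA.
-
  set c := (p + m.-1) %/ m.
  have hc1 : c * m <= p + m.-1 by rewrite /c leq_divM.
  have hc2 : p + m.-1 < c * m + m.
    by rewrite {1}(divn_eq (p + m.-1) m) -/c ltn_add2l ltn_pmod.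
  have hcs : c < size w.
    have : c * m + m <= m * size w by lia.
    by rewrite addnC -mulSn mulnC leq_pmul2l.
  have eH : forall x, x < L -> nth x0 (hw f w) (p + x) = nth x0 (hw f w) (p + L + x) := he.
  have hLm0 : L %% m = 0.
    apply/eqP; apply: contraT => hr0.
    set s := c * m + L; set a := s %/ m; set r := s %% m.
    have hsr : s = a * m + r by rewrite /a /r -divn_eq.
    have hr : r < m by rewrite /r ltn_pmod.
    have hrL : r = L %% m by rewrite /r /s modnMDl.
    have hr1 : 0 < r by rewrite hrL lt0n.
    have ha : a.+1 < size w.
      have : a.+1 * m < m * size w by rewrite mulSn; lia.
      by rewrite mulnC ltn_pmul2l.
    have E : take m (drop r (f (nth x0 w a) ++ f (nth x0 w a.+1))) = f (nth x0 w c).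
      have hsz : m <= size (drop r (f (nth x0 w a) ++ f (nth x0 w a.+1))).
        by rewrite size_drop size_cat !hf; lia.
      apply: (@eq_from_nth _ x0); first by rewrite size_takel // hf.
      move=> t; rewrite size_takel // => ht.
      rewrite nth_take // nth_drop -nthH //.
      have -> : c * m + t = p + (c * m + t - p) by lia.
      rewrite eH; last lia.
      have -> : p + L + (c * m + t - p) = a * m + (r + t) by lia.
      rewrite nth_cat hf; case: ifP => hrt.
        by rewrite nthH //; lia.
      have -> : a * m + (r + t) = a.+1 * m + (r + t - m) by rewrite mulSn; lia.
      rewrite nthH //; lia.
    move/allP: hsync => /(_ (nth x0 w a) (hal _)) /allP /(_ (nth x0 w a.+1) (hal _)).
    move/allP => /(_ (nth x0 w c) (hal _)) /allP /(_ r).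
    rewrite mem_iota E eqxx /= => H; apply: H; lia.
  set q := L %/ m.
  have hLq : L = q * m by rewrite {1}(divn_eq L m) hLm0 addn0.
  have hq : 0 < q by move: hL; rewrite hLq muln_gt0 => /andP [].
  have hc2q : c + 2 * q <= size w.
    have : (c + 2 * q) * m < (size w).+1 * m.
      rewrite mulnDl mulSn; move: hs hc1; rewrite hLq; lia.
    by rewrite ltn_pmul2r.
  exists c, q; split=> //; split=> // t ht.
  have htm : t.+1 * m <= q * m by rewrite leq_pmul2r.
  move/allP: hfirst => /(_ (nth x0 w (c + t)) (hal _)) /allP /(_ (nth x0 w (c + q + t)) (hal _)).
  move/implyP => H; apply/eqP; apply: H.
  rewrite -(nthH w (c + t) 0) //; last lia.
  rewrite -(nthH w (c + q + t) 0) //; last lia.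
  have -> : (c + t) * m + 0 = p + ((c + t) * m - p) by rewrite mulnDl; lia.
  rewrite eH; last by rewrite mulnDl; move: htm; rewrite mulSn; lia.
  apply/eqP; congr nth; rewrite !mulnDl; lia.
Qed.

End Crit.


Definition o0 : 'I_3 := @Ordinal 3 0 isT.
Definition o1 : 'I_3 := @Ordinal 3 1 isT.
Definition o2 : 'I_3 := @Ordinal 3 2 isT.
Definition mkl (n : nat) : 'I_3 := match n with 0 => o0 | 1 => o1 | _ => o2 end.
Definition mk (l : seq nat) : seq 'I_3 := map mkl l.
Definition hL : seq (seq 'I_3) :=
  [:: mk [:: 0;1;2;1;0;2;1;2;0;1;2;1;0];
      mk [:: 1;2;0;2;1;0;2;0;1;2;0;2;1];
      mk [:: 2;0;1;0;2;1;0;1;2;0;1;0;2]].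
Definition hm (x : 'I_3) : seq 'I_3 := nth [::] hL x.
Definition p1 (s : seq 'I_3) := take 2 s.
Definition p2 (s : seq 'I_3) := take 4 (drop 2 s).
Definition p3 (s : seq 'I_3) := take 3 (drop 6 s).
Definition p4 (s : seq 'I_3) := drop 9 s.
Definition gm (x : 'I_3) : seq 'I_3 :=
  let s := hm x in p1 s ++ p2 s ++ p3 s ++ p2 s ++ p1 s ++ p2 s ++ p3 s ++ p4 s.
Definition Dm (x : 'I_3) : seq 'I_3 :=
  let s := hm x in p1 s ++ p2 s ++ p1 s ++ p2 s ++ p3 s ++ p2 s ++ p1 s ++ p2 s ++ p3 s ++ p4 s.

Definition al3 := [:: o0; o1; o2].
Lemma hal3 a : a \in al3.
Proof. by rewrite !inE; case: a => [[|[|[|n]]] H]. Qed.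

Lemma allI3 (P : pred 'I_3) : all P al3 -> forall a, P a.
Proof. by move/allP=> H a; apply: H; exact: hal3. Qed.

Lemma hm_size : forall a, size (hm a) = 13.
Proof.
have H : all (fun a => size (hm a) == 13) al3 by vm_compute.
by move=> a; apply/eqP; apply: (allI3 H).
Qed.
Lemma gm_size : forall a, size (gm a) = 26.
Proof.
have H : all (fun a => size (gm a) == 26) al3 by vm_compute.
by move=> a; apply/eqP; apply: (allI3 H).
Qed.

Lemma hm_split : forall a, hm a == p1 (hm a) ++ p2 (hm a) ++ p3 (hm a) ++ p4 (hm a).
Proof.
have H : all (fun a => hm a == p1 (hm a) ++ p2 (hm a) ++ p3 (hm a) ++ p4 (hm a)) al3 by vm_compute.
exact: (allI3 H).
Qed.
Lemma p2_ne : forall a, p1 (hm a) ++ p2 (hm a) != [::] /\ p2 (hm a) ++ p1 (hm a) ++ p2 (hm a) ++ p3 (hm a) != [::].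
Proof.
have H : all (fun a => size (p2 (hm a)) == 4) al3 by vm_compute.
move=> a; have := eqP (allI3 H a).
by case: (p1 _) => [|? ?]; case: (p2 _) => [|? ?].
Qed.

Lemma hm_sync : syncb al3 hm 13. Proof. by vm_compute. Qed.
Lemma hm_first : firstb o0 al3 hm. Proof. by vm_compute. Qed.
Lemma hm_small : smallb al3 hm. Proof. by vm_compute. Qed.
Lemma gm_sync : syncb al3 gm 26. Proof. by vm_compute. Qed.
Lemma gm_first : firstb o0 al3 gm. Proof. by vm_compute. Qed.
Lemma gm_small : smallb al3 gm. Proof. by vm_compute. Qed.


Lemma red_eq (T : eqType) (w w' U X V : seq T) : X != [::] ->
  w = U ++ X ++ X ++ V -> w' = U ++ X ++ V -> sq_reduces w w'.
Proof. by move=> hX -> ->; apply: sq_step1. Qed.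

Lemma Dm_hm x : sq_reduces (Dm x) (hm x).
Proof.
have [h1 h2] := p2_ne x.
rewrite [hm x](eqP (hm_split x)) /Dm.
set a := p1 (hm x); set b := p2 (hm x); set c := p3 (hm x); set d := p4 (hm x).
apply: (@sq_reduces_trans _ _ (a ++ b ++ a ++ b ++ c ++ d)).
  apply: (red_eq (U := a) (X := b ++ a ++ b ++ c) (V := d)) => //; by rewrite -!catA.
apply: (red_eq (U := [::]) (X := a ++ b) (V := c ++ d)) => //; by rewrite /= -!catA.
Qed.

Lemma Dm_gm x : sq_reduces (Dm x) (gm x).
Proof.
have [h1 h2] := p2_ne x.
rewrite /Dm /gm.
set a := p1 (hm x); set b := p2 (hm x); set c := p3 (hm x); set d := p4 (hm x).
apply: (red_eq (U := [::]) (X := a ++ b) (V := c ++ b ++ a ++ b ++ c ++ d)) => //;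
  by rewrite /= -!catA.
Qed.

Lemma hm_ne x : hm x != [::].
Proof. by have := hm_size x; case: (hm x). Qed.
Lemma gm_ne x : gm x != [::].
Proof. by have := gm_size x; case: (gm x). Qed.

Lemma hm_inj : injective hm.
Proof.
move=> a b E; have := allP hm_first a (hal3 a).
move/allP => /(_ b (hal3 b)); rewrite E eqxx /=; by move/eqP.
Qed.

Lemma hw_inj (f : 'I_3 -> seq 'I_3) m : 0 < m -> (forall a, size (f a) = m) ->
  injective f -> injective (hw f).
Proof.
move=> m0 hf finj; elim=> [|a u IH] [|b v] //.
- move=> E; have := congr1 size E; rewrite hw_cons size_cat hf /=; lia.
- move=> E; have := congr1 size E; rewrite hw_cons size_cat hf /=; lia.
rewrite !hw_cons => /eqP; rewrite eqseq_cat ?hf // => /andP [/eqP /finj -> /eqP /IH ->] //.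
Qed.

Lemma sf_hm R : square_free R -> square_free (hw hm R).
Proof.
move=> sf; apply: (sf_hsq (x0 := o0)) => H; apply: (hsq_nsf (x0 := o0)) sf.
exact: (crit hal3 (m := 13) isT hm_size hm_sync hm_first hm_small H).
Qed.

Lemma sf_gm R : square_free R -> square_free (hw gm R).
Proof.
move=> sf; apply: (sf_hsq (x0 := o0)) => H; apply: (hsq_nsf (x0 := o0)) sf.
exact: (crit hal3 (m := 26) isT gm_size gm_sync gm_first gm_small H).
Qed.

Lemma main n : exists (W : seq 'I_3) (s : seq (seq 'I_3)) R0 s',
  s = R0 :: s' /\ uniq s /\ n <= size s /\ 0 < size R0 /\
  (forall R, R \in s -> size R <= size R0) /\ (forall R, R \in s -> is_reduct W R).
Proof.
elim: n => [|n [W [s [R0 [s' [Es [hu [hn [h0 [hmax hr]]]]]]]]]].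
  exists [:: o0], [:: [:: o0]], [:: o0], [::]; do 5 (split=> //).
    by move=> R; rewrite mem_seq1 => /eqP ->.
  move=> R; rewrite mem_seq1 => /eqP ->; split; first exact: sq_refl.
  by apply: (sf_hsq (x0 := o0)); move/(hsqbP o0).
exists (hw Dm W), (hw gm R0 :: map (hw hm) s), (hw gm R0), (map (hw hm) s).
have szg : size (hw gm R0) = 26 * size R0 := size_hw gm_size R0.
have szh : forall R, size (hw hm R) = 13 * size R := size_hw hm_size.
have R0s : R0 \in s by rewrite Es mem_head.
split=> //; split.
  rewrite cons_uniq (map_inj_uniq (hw_inj (m := 13) isT hm_size hm_inj)) hu andbT.
  apply/mapP => [[R hR E]]; have := hmax R hR; have := congr1 size E.
  rewrite szg szh; lia.
split; first by rewrite /= size_map.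
split; first by rewrite szg; lia.
split.
  move=> R; rewrite inE => /orP [/eqP -> // | /mapP [R1 hR1 ->]].
  rewrite szg szh; have := hmax R1 hR1; lia.
have rDh : sq_reduces (hw Dm W) (hw hm W) := sq_reduces_subst W Dm_hm.
have rDg : sq_reduces (hw Dm W) (hw gm W) := sq_reduces_subst W Dm_gm.
move=> R; rewrite inE => /orP [/eqP -> | /mapP [R1 hR1 ->]].
  have [r1 s1] := hr R0 R0s; split; last exact: sf_gm.
  exact: sq_reduces_trans rDg (sq_reduces_hw gm_ne r1).
have [r1 s1] := hr R1 hR1; split; last exact: sf_hm.
exact: sq_reduces_trans rDh (sq_reduces_hw hm_ne r1).
Qed.

Theorem theorem2p4 : forall k : nat, 1 <= k ->
  exists W : seq 'I_3, r_ge W k.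
Proof.
move=> k _; have [W [s [R0 [s' [_ [hu [hk [_ [_ hr]]]]]]]]] := main k.
by exists W, s.
Qed.
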